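(* Fix $m\in[n]$. There is a unique bijection $\psi_m$ between the set of complete $m$-chains of $\Pi(n)$ and the set of $(m,n)$-parking functions that sends a chain $C$ with top element $P$ and Jordan–Hölder permutation $\lambda$ to a partial parking function with priority forest $P$ and bird's eye permutation $\lambda^{-1}$. Explicitly, $\psi_m(C)=s_P\circ\lambda$, where $s_P$ is the shifted parent map of $P$.
   Context: Notation: $[n]=\{1,\dots,n\}$, $[n]_0=\{0,1,\dots,n\}$. Partial functions $f:[a]\to[b]$ are functions defined on a subset of $[a]$; a partial permutation is an injective one, and its inverse is the partial function defined on its image reversing it; compositions are defined where both steps are defined. Priority forests and the priority lattice: a priority forest (on $[n]_0$, with $m$ edges) is a rooted forest with vertex set $[n]_0$ and $m$ edges whose component trees $T_0,\dots,T_{n-m}$ are increasing (each non-root vertex has a larger label than its parent) and satisfy: for $j<k$ every label of $T_j$ is smaller than every label of $T_k$. The priority lattice $\Pi(n)$ consists of all priority forests on $[n]_0$ together with an extra top element $\hat1$; for priority forests $P\le P'$ iff $E(P)\subseteq E(P')$. The bottom $\hat0$ is the edgeless forest. A complete $m$-chain is a saturated chain $\hat0=P_0\lessdot P_1\lessdot\cdots\lessdot P_m$ of priority forests (each obtained from the previous by adding one edge). For priority forests $P\lessdot P'$, $\lambda(P,P')$ is the larger endpoint of the unique edge in $E(P')\setminus E(P)$; the Jordan–Hölder permutation of such a chain is the injective map $\lambda:[m]\to[n]$, $i\mapsto\lambda(P_{i-1},P_i)$, with partial inverse $\lambda^{-1}:[n]\to[m]$. Shifted parent map: for a priority forest $P$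 with parent map $p$ (defined on non-root vertices), $s_P:[n]\to[n]$ is the partial function with $s_P(i)=p(i)+1$ for every non-root vertex $i$ and undefined at roots. Partial parking functions: an $(m,n)$-parking function is a map $\pi:[m]\to[n]$ such that when cars $1,\dots,m$ arrive in this order to a one-way street with spots $1,\dots,n$, and car $i$ parks in the first empty spot $\ge\pi(i)$, all $m$ cars park. Its bird's eye permutation $\omega_\pi:[n]\to[m]$ is the partial permutation sending an occupied spot to the car parked there (undefined on empty spots). The priority forest of $\pi$ is the priority forest (on $[n]_0$, with $m$ edges) whose shifted parent map is $\pi\circ\omega_\pi$, i.e. vertex $i$ is a non-root with parent $\pi(\omega_\pi(i))-1$ if spot $i$ is occupied, and a root otherwise. *)

(* Defs.v *)
From mathcomp Require Import all_boot.
Set Implicit Arguments.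
Unset Strict Implicit.
Unset Printing Implicit Defensive.

(* Vertices of [n]_0 = {0,...,n}: the ordinal 'I_n.+1, whose value is the label. *)
Definition vert (n : nat) := 'I_n.+1.

(* A forest on [n]_0 is given by its set of directed edges (parent, child). *)
Definition pedges (n : nat) := {set vert n * vert n}.

Definition adj n (E : pedges n) : rel (vert n) :=
  fun x y => ((x, y) \in E) || ((y, x) \in E).
Definition samecomp n (E : pedges n) (x y : vert n) : bool := connect (adj E) x y.

Definition is_pforest n (E : pedges n) : bool :=
  [&& [forall e in E, e.1 < e.2],
      [forall c : vert n, forall a : vert n, forall b : vert n,
          ((a, c) \in E) && ((b, c) \in E) ==> (a == b)] &
      [forall x : vert n, forall y : vert n, forall x' : vert n, forall y' : vert n,
          [&& samecomp E x x', samecomp E y y', ~~ samecomp E x y & x < y]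
          ==> (x' < y')]].

(* A complete m-chain \hat0 = P_0 <. P_1 <. ... <. P_m, stored as a finite
   function k |-> E(P_k). *)
Definition chain_t n m := {ffun 'I_m.+1 -> pedges n}.
Definition ch n m (C : chain_t n m) (k : nat) : pedges n := C (inord k).

Definition is_chain n m (C : chain_t n m) : bool :=
  [&& ch C 0 == set0,
      [forall k : 'I_m.+1, is_pforest (C k)] &
      [forall k : 'I_m, exists e : vert n * vert n,
          (e \notin ch C k) && (ch C k.+1 == e |: ch C k)]].

(* Partial functions [a] -> [b] are encoded as nat -> option nat. *)
Definition pfcomp (g f : nat -> option nat) : nat -> option nat :=
  fun i => obind g (f i).

Definition pinv (m : nat) (f : nat -> option nat) : nat -> option nat :=
  fun j => ohead [seq i <- iota 1 m | f i == Some j].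

Definition lam n m (C : chain_t n m) : nat -> option nat :=
  fun i => if (1 <= i <= m) then
             omap (fun e : vert n * vert n => maxn (val e.1) (val e.2))
                  [pick e in ch C i :\: ch C i.-1]
           else None.

Definition lam_inv n m (C : chain_t n m) : nat -> option nat := pinv m (lam C).

Definition sP n (E : pedges n) : nat -> option nat :=
  fun i => if (1 <= i <= n) then
             omap (fun e : vert n * vert n => (val e.1).+1)
                  [pick e in E | val e.2 == i]
           else None.

(* (m,n) parking functions pi : [m] -> [n] encoded as f : {ffun 'I_m -> 'I_n}
   with pi (k.+1) = (f k).+1. *)
Definition pf_t n m := {ffun 'I_m -> 'I_n}.
Definition pv n m (f : pf_t n m) : nat -> option nat :=
  fun i => if i is k.+1 then omap (fun o : 'I_m => (val (f o)).+1) (insub k)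
           else None.

(* first empty spot >= a among spots 1..n (n.+1 if there is none) *)
Definition first_free (n : nat) (occ : seq nat) (a : nat) : nat :=
  head n.+1 [seq s <- iota a (n.+1 - a) | s \notin occ].

Fixpoint parkrec (n : nat) (occ : seq nat) (prefs : seq nat) : seq nat :=
  match prefs with
  | [::] => [::]
  | a :: r => let s := first_free n occ a in s :: parkrec n (s :: occ) r
  end.

Definition spots n m (f : pf_t n m) : seq nat :=
  parkrec n [::] [seq (val (f i)).+1 | i <- enum 'I_m].

Definition is_parking n m (f : pf_t n m) : bool :=
  all (fun s => s <= n) (spots f).

Definition omega n m (f : pf_t n m) : nat -> option nat :=
  fun j => if (1 <= j <= n) && (j \in spots f) then Some (index j (spots f)).+1
           else None.

Definition chain_pf_bij n m (psi : chain_t n m -> pf_t n m) : Prop :=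
  [/\ forall C, is_chain C -> is_parking (psi C),
      forall C1 C2, is_chain C1 -> is_chain C2 -> psi C1 = psi C2 -> C1 = C2 &
      forall f, is_parking f -> exists2 C, is_chain C & psi C = f].

(* psi sends every chain C with top P = P_m and Jordan-Holder permutation
   lambda to a parking function with priority forest P (i.e. whose shifted
   parent map pi o omega_pi equals s_P) and bird's eye permutation lambda^-1. *)
Definition psi_spec n m (psi : chain_t n m -> pf_t n m) : Prop :=
  forall C, is_chain C ->
    (forall j, 1 <= j <= n -> pfcomp (pv (psi C)) (omega (psi C)) j = sP (ch C m) j)
    /\ (forall j, 1 <= j <= n -> omega (psi C) j = lam_inv C j).

(* Main.v *)
Require Import Defs.
From mathcomp Require Import all_boot.
From mathcomp Require Import zify.
Set Implicit Arguments. Unset Strict Implicit. Unset Printing Implicit Defensive.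

Lemma conn_inv (T : finType) (U : Type) (e : rel T) (g : T -> U) :
  (forall x y, e x y -> g x = g y) -> forall x y, connect e x y -> g x = g y.
Proof.
move=> H x y /connectP [p pth ->]; elim: p x pth => [|z p IH] x //= /andP [h1 h2].
by rewrite (H _ _ h1); apply: IH.
Qed.

Section Forest.
Variable n : nat.
Implicit Types E : pedges n.

Definition hp E (z : nat) : bool := [exists e in E, val e.2 == z].
Definition incr E := forall e, e \in E -> val e.1 < val e.2.
Definition upar E := forall a b c, (a, c) \in E -> (b, c) \in E -> a = b.
Definition gapP E := forall p c (z : nat), (p, c) \in E -> p < z < c -> hp E z.

Lemma pf_incr E : is_pforest E -> incr E.
Proof. by case/and3P => /forall_inP hi _ _ e /hi. Qed.
Lemma pf_upar E : is_pforest E -> upar E.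
Proof.
case/and3P => _ /forallP hu _ a b c ha hb; apply/eqP.
by move: (hu c) => /forallP/(_ a)/forallP/(_ b)/implyP; apply; rewrite ha hb.
Qed.
Lemma pf_ord E x y x' y' : is_pforest E -> samecomp E x x' -> samecomp E y y' ->
  ~~ samecomp E x y -> x < y -> x' < y'.
Proof.
case/and3P => _ _ /forallP ho h1 h2 h3 h4.
move: (ho x) => /forallP/(_ y)/forallP/(_ x')/forallP/(_ y')/implyP; apply.
by rewrite h1 h2 h3 h4.
Qed.

Lemma adj_sym E : symmetric (adj E).
Proof. by move=> u v; rewrite /adj orbC. Qed.

Definition par E (x : vert n) : vert n := odflt x [pick a | (a, x) \in E].
Definition rootof E x := iter n.+1 (par E) x.

Lemma par_le E x : incr E -> par E x <= x.
Proof. move=> hi; rewrite /par; case: pickP => [a ha|] //=; exact: ltnW (hi (a, x) ha). Qed.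

Lemma par_lt E x : incr E -> par E x != x -> par E x < x.
Proof.
move=> hi ne; rewrite ltn_neqAle par_le // andbT.
by rewrite val_eqE.
Qed.

Lemma iter_par E x k : incr E ->
  iter k (par E) x <= x - k \/ par E (iter k (par E) x) = iter k (par E) x.
Proof.
move=> hi; elim: k => [|k [IH|IH]] /=; first by left; rewrite subn0.
- case: (eqVneq (par E (iter k (par E) x)) (iter k (par E) x)) => [e|ne].
  + by right; rewrite e.
  + left; have := par_lt hi ne; lia.
- by right; rewrite IH.
Qed.

Lemma rootof_root E x : incr E -> par E (rootof E x) = rootof E x.
Proof.
move=> hi; case: (iter_par x n.+1 hi) => // h.
apply: val_inj => /=; have := par_le (rootof E x) hi; rewrite /rootof in h *.
have := ltn_ord x; lia.
Qed.

Lemma rootof_fix E r : par E r = r -> rootof E r = r.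
Proof. exact: iter_fix. Qed.

Lemma rootof_par E x : incr E -> rootof E (par E x) = rootof E x.
Proof. by move=> hi; rewrite /rootof -iterSr iterS rootof_root. Qed.

Lemma par_edge E a b : upar E -> (a, b) \in E -> par E b = a.
Proof.
move=> hu hab; rewrite /par; case: pickP => [a' ha'|/(_ a)] /=.
- exact: hu ha' hab.
- by rewrite hab.
Qed.

Lemma rootof_conn E x y : incr E -> upar E -> samecomp E x y -> rootof E x = rootof E y.
Proof.
move=> hi hu; apply: conn_inv => u v /orP [] h.
- by rewrite -(par_edge hu h) rootof_par.
- by rewrite -(par_edge hu h) rootof_par.
Qed.

Lemma rootof_le E x : incr E -> rootof E x <= x.
Proof.
move=> hi; rewrite /rootof.
have H : forall k, iter k (par E) x <= x.
  by elim=> //= k IH; exact: leq_trans (par_le _ hi) IH.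
exact: H.
Qed.

Lemma pforest_gap E : is_pforest E -> gapP E.
Proof.
move=> hpf p c z hpc /andP [pz zc].
have hi := pf_incr hpf; have hu := pf_upar hpf.
apply: contraT => nh.
have zn : z < n.+1 by apply: ltn_trans zc (ltn_ord c).
pose zv : vert n := Ordinal zn.
have pz' : par E zv = zv.
  rewrite /par; case: pickP => [a ha|] //=; move/negP: nh; case.
  by apply/existsP; exists (a, zv); rewrite ha /=.
case sc: (samecomp E p zv).
- have := rootof_conn hi hu sc; rewrite (rootof_fix pz') => e.
  have := rootof_le p hi; rewrite e /= ; lia.
- have := @pf_ord E p zv c zv hpf _ _ (negbT sc) pz.
  rewrite /= ; move=> H; have : c < z.
    apply: H; [apply: connect1; by rewrite /adj hpc | exact: connect0].
  lia.
Qed.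

Definition blk E (x : nat) := count (fun r => ~~ hp E r) (iota 0 x.+1).

Lemma blk_split E x y : x <= y ->
  blk E y = blk E x + count (fun r => ~~ hp E r) (iota x.+1 (y - x)).
Proof.
move=> le; rewrite /blk.
have -> : y.+1 = x.+1 + (y - x) by lia.
by rewrite iotaD count_cat.
Qed.

Lemma blk_mono E x y : x <= y -> blk E x <= blk E y.
Proof. by move=> le; rewrite (blk_split E le) leq_addr. Qed.

Lemma blk_gap E x y : x <= y -> (forall r, x < r <= y -> hp E r) -> blk E x = blk E y.
Proof.
move=> le H; rewrite (blk_split E le) (eq_in_count (a2 := pred0)) ?count_pred0 ?addn0 //.
move=> r; rewrite mem_iota => hr /=; rewrite H //; lia.
Qed.

Lemma blk_root E x y : ~~ hp E y -> x < y -> blk E x < blk E y.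
Proof.
case: y => [|y] // hy hxy.
have -> : blk E y.+1 = blk E y + 1.
  rewrite /blk -(addn1 y.+1) iotaD count_cat /= hy; lia.
have := blk_mono E (hxy : x <= y); lia.
Qed.

Section Gap.
Variable E : pedges n.
Hypotheses (hi : incr E) (hu : upar E) (hg : gapP E).

Lemma blk_edge a b : (a, b) \in E -> blk E a = blk E b.
Proof.
move=> hab; apply: blk_gap; first exact: ltnW (hi hab).
move=> r /andP [ar rb]; case: (ltngtP r b) rb => // [rb _|-> _].
- by apply: (hg hab); rewrite ar rb.
- by apply/existsP; exists (a, b); rewrite hab /=.
Qed.

Lemma conn_blk x y : samecomp E x y -> blk E x = blk E y.
Proof.
apply: (conn_inv (g := fun v : vert n => blk E v)) => u v /orP [] h; first exact: blk_edge h.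
by rewrite (blk_edge h).
Qed.

Lemma blk_conn k (x y : vert n) : y < k -> x <= y -> blk E x = blk E y -> samecomp E x y.
Proof.
elim: k x y => [//|k IH] x y yk xy be.
case: (eqVneq x y) => [->|nxy]; first exact: connect0.
have xy' : x < y by rewrite ltn_neqAle xy andbT val_eqE.
case hy: (hp E y); last by have := blk_root (negbT hy) xy'; rewrite be ltnn.
case/existsP: hy => [[a y0]] /= /andP [hay /eqP ey].
have y0y : y0 = y by apply: val_inj.
subst y0.
have ba : blk E a = blk E y := blk_edge hay.
have ay : a < y := hi hay.
have ayc : samecomp E a y by apply: connect1; rewrite /adj hay.
case: (leqP x a) => xa.
- apply: connect_trans (IH x a _ xa _) ayc; [lia | congruence].
- have : samecomp E a x by apply: IH; [lia | exact: ltnW | congruence].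
  rewrite /samecomp (sym_connect_sym (@adj_sym E)) => h.
  exact: connect_trans h ayc.
Qed.

Lemma gap_pforest : is_pforest E.
Proof.
apply/and3P; split.
- by apply/forall_inP => e /hi.
- apply/forallP => c; apply/forallP=> a; apply/forallP=> b; apply/implyP => /andP [ha hb].
  by apply/eqP; exact: hu ha hb.
- apply/forallP => x; apply/forallP => y; apply/forallP => x'; apply/forallP => y'.
  apply/implyP => /and4P [h1 h2 h3 h4].
  have e1 := conn_blk h1; have e2 := conn_blk h2.
  have : blk E x < blk E y.
    rewrite ltn_neqAle blk_mono ?andbT; last exact: ltnW.
    apply/negP => /eqP be; apply: (negP h3); apply: (@blk_conn y.+1) => //; exact: ltnW.
  rewrite e1 e2 => lt; rewrite ltnNge; apply/negP => le.
  have := blk_mono E le; lia.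
Qed.
End Gap.
End Forest.

Lemma head_filter_iota (P : pred nat) d a k :
  (head d (filter P (iota a k)) = d /\ forall t, a <= t < a + k -> ~~ P t) \/
  [/\ a <= head d (filter P (iota a k)) < a + k, P (head d (filter P (iota a k)))
    & forall t, a <= t < head d (filter P (iota a k)) -> ~~ P t].
Proof.
elim: k a => [|k IH] a /=.
  by left; split => // t; lia.
case Pa: (P a) => /=.
  by right; split => //; [lia | move=> t; lia].
case: (IH a.+1) => [[-> H]|[H1 H2 H3]].
- left; split => // t ht; case: (eqVneq t a) => [->|ne]; first by rewrite Pa.
  apply: H; lia.
- right; split => //; first lia.
  move=> t ht; case: (eqVneq t a) => [->|ne]; first by rewrite Pa.
  apply: H3; lia.
Qed.

Lemma ff_eq n occ a c : a <= c <= n -> c \notin occ ->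
  (forall t, a <= t < c -> t \in occ) -> first_free n occ a = c.
Proof.
move=> /andP [ac cn] nc H; rewrite /first_free.
have e : a + (n.+1 - a) = n.+1 by lia.
case: (head_filter_iota (fun s => s \notin occ) n.+1 a (n.+1 - a)); rewrite e.
- move=> [_ H']; have := H' c; rewrite nc; lia.
- set r := head _ _ => -[H1 H2 H3].
  case: (ltngtP r c) => // h.
  + have := H r; rewrite (negbTE H2); lia.
  + have := H3 c; rewrite nc; lia.
Qed.

Lemma ff_props n occ a : first_free n occ a <= n ->
  [/\ a <= first_free n occ a, first_free n occ a \notin occ &
      forall t, a <= t < first_free n occ a -> t \in occ].
Proof.
rewrite /first_free.
case: (head_filter_iota (fun s => s \notin occ) n.+1 a (n.+1 - a)).
- by move=> [-> _]; rewrite ltnn.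
- move=> [/andP [H1 _] H2 H3] _; split => //.
  by move=> t /H3; rewrite negbK.
Qed.

Lemma size_parkrec n occ pr : size (parkrec n occ pr) = size pr.
Proof. by elim: pr occ => //= a pr IH occ; rewrite IH. Qed.

Lemma nth_parkrec n occ pr j : j < size pr ->
  nth 0 (parkrec n occ pr) j =
  first_free n (rev (take j (parkrec n occ pr)) ++ occ) (nth 0 pr j).
Proof.
elim: pr occ j => //= a pr IH occ [|j] //= hj.
by rewrite IH // rev_cons cat_rcons.
Qed.

Lemma nth_prefs n m (f : pf_t n m) j (hj : j < m) :
  nth 0 [seq (val (f i)).+1 | i <- enum 'I_m] j = (f (Ordinal hj)).+1.
Proof.
rewrite (nth_map (Ordinal hj)) ?size_enum_ord //; congr (_.+1); congr (val (f _)).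
by apply: val_inj; rewrite /= nth_enum_ord.
Qed.

Lemma size_spots n m (f : pf_t n m) : size (spots f) = m.
Proof. by rewrite /spots size_parkrec size_map size_enum_ord. Qed.

Lemma nth_spots n m (f : pf_t n m) j (hj : j < m) :
  nth 0 (spots f) j = first_free n (rev (take j (spots f))) (f (Ordinal hj)).+1.
Proof.
rewrite /spots nth_parkrec; first by rewrite cats0 nth_prefs.
by rewrite size_map size_enum_ord.
Qed.

Lemma pick_set1 (T : finType) (a : T) (X Y : {set T}) :
  X = a |: Y -> a \notin Y -> [pick e in X :\: Y] = Some a.
Proof.
move=> -> na; case: pickP => [e|/(_ a)].
- rewrite in_setD in_setU1 => /andP [ne /orP [/eqP -> //|h]].
  by rewrite h in ne.
- by rewrite in_setD in_setU1 eqxx na.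
Qed.

Definition ed n m (C : chain_t n m) (i : nat) : vert n * vert n :=
  odflt (ord0, ord0) [pick e in ch C i :\: ch C i.-1].

Lemma ed_eq n m (C : chain_t n m) i a :
  ch C i = a |: ch C i.-1 -> a \notin ch C i.-1 -> ed C i = a.
Proof. by move=> h1 h2; rewrite /ed (pick_set1 h1 h2). Qed.

Lemma ohead_filter (f : nat -> nat) j a k :
  ohead [seq i <- iota a k | f i == j] =
  if j \in map f (iota a k) then Some (a + index j (map f (iota a k))) else None.
Proof.
elim: k a => [|k IH] a //=.
rewrite in_cons; case fa: (f a == j) => /=.
- by rewrite (eqP fa) eqxx addn0.
- rewrite IH eq_sym fa /=; case: ifP => // _; by rewrite addSnnS.
Qed.

Lemma hp_setU1 n (a : vert n * vert n) (X : pedges n) t :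
  hp (a |: X) t = (val a.2 == t) || hp X t.
Proof.
apply/existsP/orP => [[e /andP [/setU1P [->|h] ht]]|[h|/existsP [e /andP [h1 h2]]]].
- by left.
- by right; apply/existsP; exists e; rewrite h ht.
- by exists a; rewrite setU11 h.
- by exists e; rewrite setU1r.
Qed.

Section Chain.
Variables (n m : nat) (C : chain_t n m).
Hypothesis hC : is_chain C.

Definition cc i := val (ed C i).2.
Definition pp i := val (ed C i).1.

Lemma ch0 : ch C 0 = set0.
Proof. by case/and3P: hC => /eqP. Qed.

Lemma ch_pf k : is_pforest (ch C k).
Proof. by case/and3P: hC => _ /forallP h _; exact: h. Qed.

Lemma ch_step i : 0 < i <= m -> ch C i = ed C i |: ch C i.-1 /\ ed C i \notin ch C i.-1.
Proof.
case: i => [|k] //= hk.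
case/and3P: hC => _ _ /forallP /(_ (Ordinal hk)) /existsP [e /andP [ne /eqP he]].
by rewrite (ed_eq he ne).
Qed.

Lemma ed_in i : 0 < i <= m -> ed C i \in ch C i.
Proof. by move=> hi; rewrite (ch_step hi).1 setU11. Qed.

Lemma ed_in' i : 0 < i <= m -> ((ed C i).1, (ed C i).2) \in ch C i.
Proof. by move=> hi; rewrite -surjective_pairing ed_in. Qed.

Lemma ch_mono j k e : j <= k <= m -> e \in ch C j -> e \in ch C k.
Proof.
elim: k => [|k IH] /andP [jk km].
  by move: jk; rewrite leqn0 => /eqP ->.
case: (eqVneq j k.+1) => [-> //|ne] he.
have hk : 0 < k.+1 <= m by lia.
rewrite (ch_step hk).1 /= in_setU1 IH ?orbT //; lia.
Qed.

Lemma pp_lt i : 0 < i <= m -> pp i < cc i.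
Proof. by move=> hi; apply: (pf_incr (ch_pf i)); apply: ed_in. Qed.

Lemma cc_le i : cc i <= n.
Proof. exact: (ltn_ord (ed C i).2). Qed.

Lemma cc_root i : 0 < i <= m -> ~~ hp (ch C i.-1) (cc i).
Proof.
move=> hi; have [h1 h2] := ch_step hi.
have hed := ed_in' hi.
have hu := pf_upar (ch_pf i).
move: h2 hed; rewrite /cc; case: (ed C i) => [a0 b0] /= h2 hed.
apply/existsP => -[[a b] /andP [hab /eqP hb]].
have e2 : b = b0 by apply: val_inj.
subst b.
have hab' : (a, b0) \in ch C i by rewrite h1 in_setU1 hab orbT.
have ea := hu _ _ _ hab' hed.
by subst a; rewrite hab in h2.
Qed.

Lemma hp_ch k t : k <= m -> hp (ch C k) t = (t \in map cc (iota 1 k)).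
Proof.
elim: k => [|k IH] hk.
  by rewrite ch0 /=; apply/negbTE/existsP => -[e]; rewrite in_set0.
have hk' : 0 < k.+1 <= m by lia.
have -> : iota 1 k.+1 = iota 1 k ++ [:: k.+1] by rewrite -[k.+1]addn1 iotaD add1n addn1.
rewrite map_cat mem_cat (ch_step hk').1 /= hp_setU1 IH; last lia.
by rewrite in_cons in_nil orbF orbC eq_sym.
Qed.

Lemma ff_step k : k < m ->
  first_free n (rev (map cc (iota 1 k))) (pp k.+1).+1 = cc k.+1.
Proof.
move=> hk; have hk' : 0 < k.+1 <= m by lia.
apply: ff_eq.
- by rewrite pp_lt // cc_le.
- rewrite mem_rev -hp_ch; [exact: (cc_root hk') | lia].
- move=> t ht; rewrite mem_rev -hp_ch; last lia.
  have := pforest_gap (ch_pf k.+1) (ed_in' hk') (z := t).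
  rewrite -/(pp k.+1) -/(cc k.+1) (ch_step hk').1 hp_setU1 /=.
  move=> /(_ ht) /orP [/eqP e|//]; by move: ht; rewrite /cc -e ltnn andbF.
Qed.

Lemma uniq_cc : uniq (map cc (iota 1 m)).
Proof.
have : forall k, k <= m -> uniq (map cc (iota 1 k)); last exact.
elim=> [//|k IH] hk.
have hk' : 0 < k.+1 <= m by lia.
have -> : iota 1 k.+1 = iota 1 k ++ [:: k.+1] by rewrite -[k.+1]addn1 iotaD add1n addn1.
rewrite map_cat cats1 rcons_uniq IH ?andbT; last lia.
rewrite -hp_ch; [exact: (cc_root hk') | lia].
Qed.

Lemma sP_cc i : 0 < i <= m -> sP (ch C m) (cc i) = Some (pp i).+1.
Proof.
move=> hi; rewrite /sP.
have -> : 1 <= cc i <= n by rewrite cc_le andbT; have := pp_lt hi; lia.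
have hin : ed C i \in ch C m by apply: (ch_mono (j := i)); [lia | exact: ed_in].
have hu := pf_upar (ch_pf m).
case: pickP => [e /andP [he /eqP hce]|/(_ (ed C i))] /=.
- congr (Some _.+1); rewrite /pp.
  have e2 : e.2 = (ed C i).2 by apply: val_inj.
  move: he hin; rewrite [e]surjective_pairing [ed C i]surjective_pairing e2 => he hin.
  by rewrite (hu _ _ _ he hin).
- by rewrite hin eqxx.
Qed.

Lemma sP_none t : t \notin map cc (iota 1 m) -> sP (ch C m) t = None.
Proof.
move=> ht; rewrite /sP; case: ifP => // _; case: pickP => [e /andP [he /eqP hte]|] //=.
by move: ht; rewrite -hp_ch // => /existsP []; exists e; rewrite he hte /=.
Qed.

Lemma lam_cc i : 0 < i <= m -> lam C i = Some (cc i).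
Proof.
move=> hi; have [h1 h2] := ch_step hi.
rewrite /lam hi (pick_set1 h1 h2) /=; congr Some; apply/maxn_idPr; exact: ltnW (pp_lt hi).
Qed.

End Chain.

Section Psi.
Variables (n m : nat).

Definition psi (C : chain_t n.+1 m) : pf_t n.+1 m := [ffun k : 'I_m => inord (pp C k.+1)].

Lemma psiE C (hC : is_chain C) (k : 'I_m) : val (psi C k) = pp C k.+1.
Proof.
have hk : 0 < k.+1 <= m by rewrite ltn_ord.
rewrite /psi ffunE /= inordK //; have := pp_lt hC hk; have := cc_le C k.+1; lia.
Qed.

Lemma pv_psi (C : chain_t n.+1 m) (hC : is_chain C) i : 0 < i <= m -> pv (psi C) i = Some (pp C i).+1.
Proof.
case: i => [|i] // hi; rewrite /pv; case: insubP => [k _ hk|]; last by move=> /negP []; lia.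
by rewrite /= psiE // hk.
Qed.

Lemma spots_psi C : is_chain C -> spots (psi C) = map (cc C) (iota 1 m).
Proof.
move=> hC; set s := spots (psi C).
have hs : size s = m := size_spots _.
have H : forall j, j <= m -> take j s = map (cc C) (iota 1 j).
  elim=> [|j IH] hj; first by rewrite take0.
  rewrite (take_nth 0) ?hs // (nth_spots _ hj) IH; last lia.
  rewrite psiE // (ff_step hC hj).
  have -> : iota 1 j.+1 = iota 1 j ++ [:: j.+1] by rewrite -[j.+1]addn1 iotaD add1n addn1.
  by rewrite map_cat cats1.
by rewrite -(take_size s) hs; exact: H.
Qed.

Lemma lam_inv_eq (C : chain_t n.+1 m) (hC : is_chain C) j : lam_inv C j =
  if j \in map (cc C) (iota 1 m) then Some (index j (map (cc C) (iota 1 m))).+1 else None.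
Proof.
rewrite /lam_inv /pinv (eq_in_filter (a2 := fun i => cc C i == j)).
  by rewrite ohead_filter add1n.
move=> i; rewrite mem_iota => hi; rewrite (lam_cc hC); last lia.
by [].
Qed.

Lemma lam_inv_cc (C : chain_t n.+1 m) (hC : is_chain C) i : 0 < i <= m -> lam_inv C (cc C i) = Some i.
Proof.
move=> hi; rewrite lam_inv_eq //.
have him : i.-1 < size (map (cc C) (iota 1 m)) by rewrite size_map size_iota; lia.
have e : cc C i = nth 0 (map (cc C) (iota 1 m)) i.-1.
  by rewrite (nth_map 0) ?size_iota ?nth_iota; [congr cc; lia | lia | lia].
by rewrite e mem_nth // index_uniq ?uniq_cc //; congr Some; lia.
Qed.

Lemma omega_psi (C : chain_t n.+1 m) (hC : is_chain C) j : 1 <= j <= n.+1 -> omega (psi C) j = lam_inv C j.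
Proof. by move=> hj; rewrite /omega hj spots_psi // lam_inv_eq. Qed.

Lemma spec1_psi (C : chain_t n.+1 m) (hC : is_chain C) j : 1 <= j <= n.+1 ->
  pfcomp (pv (psi C)) (omega (psi C)) j = sP (ch C m) j.
Proof.
move=> hj; rewrite /pfcomp /omega hj spots_psi //.
case: ifP; rewrite andTb => hin; last by rewrite sP_none // hin.
set i := index j _.
have -> : obind (pv (psi C)) (Some i.+1) = pv (psi C) i.+1 by [].
have him : i < m by have := hin; rewrite -index_mem size_map size_iota.
have hj' : cc C i.+1 = j.
  have := nth_index 0 hin; rewrite -/i (nth_map 0) ?size_iota // nth_iota //.
have hi1 : 0 < i.+1 <= m := him.
by rewrite (pv_psi hC hi1) -hj' (sP_cc hC hi1).
Qed.

Lemma psi_inj C1 C2 : is_chain C1 -> is_chain C2 -> psi C1 = psi C2 -> C1 = C2.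
Proof.
move=> h1 h2 E.
have hs : map (cc C1) (iota 1 m) = map (cc C2) (iota 1 m) by rewrite -!spots_psi // E.
have he : forall i, 0 < i <= m -> ed C1 i = ed C2 i.
  case=> [|i] // hi.
  have hc : cc C1 i.+1 = cc C2 i.+1.
    have := congr1 (fun s => nth 0 s i) hs.
    by rewrite /= !(nth_map 0) ?size_iota ?nth_iota // add1n.
  have hp : pp C1 i.+1 = pp C2 i.+1.
    by have := congr1 (fun f : pf_t n.+1 m => val (f (Ordinal hi))) E; rewrite /= !psiE.
  rewrite [ed C1 i.+1]surjective_pairing [ed C2 i.+1]surjective_pairing.
  by congr pair; apply: val_inj.
have hch : forall k, k <= m -> ch C1 k = ch C2 k.
  elim=> [|k IH] hk; first by rewrite !ch0.
  have hk' : 0 < k.+1 <= m by lia.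
  by rewrite (ch_step h1 hk').1 (ch_step h2 hk').1 he // IH //; lia.
apply/ffunP => k; have := hch k (ltn_ord k); by rewrite /ch inord_val.
Qed.

Lemma psi_unique (psi' : chain_t n.+1 m -> pf_t n.+1 m) : psi_spec psi' ->
  forall C, is_chain C -> psi' C = psi C.
Proof.
move=> hs C hC; apply/ffunP => k.
have hk : 0 < k.+1 <= m by rewrite ltn_ord.
have hj : 1 <= cc C k.+1 <= n.+1 by rewrite cc_le andbT; have := pp_lt hC hk; lia.
have [s1 s2] := hs C hC.
have := s1 _ hj; rewrite /pfcomp s2 // lam_inv_cc //= sP_cc // /pv.
case: insubP => [k' _ hk'|]; last by rewrite ltn_ord.
move=> [] e; apply: val_inj; rewrite psiE // -e.
by congr (val (psi' C _)); apply: val_inj.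
Qed.

End Psi.

Section Surj.
Variables (n m : nat) (f : pf_t n.+1 m).
Hypothesis hf : is_parking f.

Let s := spots f.

Lemma hs_size : size s = m.
Proof. exact: size_spots. Qed.

Lemma nth_spots' (j : 'I_m) :
  nth 0 s j = first_free n.+1 (rev (take j s)) (f j).+1.
Proof.
rewrite (nth_spots f (ltn_ord j)); congr (first_free _ _ (val (f _)).+1); exact: val_inj.
Qed.

Lemma s_props (j : 'I_m) :
  [/\ (f j).+1 <= nth 0 s j <= n.+1,
      forall i : 'I_m, i < j -> nth 0 s i != nth 0 s j &
      forall t, f j < t < nth 0 s j -> exists2 i : 'I_m, i < j & nth 0 s i = t].
Proof.
have hsj : nth 0 s j <= n.+1.
  by apply: (allP hf); apply: mem_nth; rewrite hs_size.
have := @ff_props n.+1 (rev (take j s)) (f j).+1.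
rewrite -nth_spots' => /(_ hsj) [H1 H2 H3].
split.
- by apply/andP; split.
- move=> i ij; apply/negP => /eqP e; move: H2; rewrite mem_rev -e.
  rewrite -(nth_take 0 ij) mem_nth // size_takel //; rewrite hs_size; exact: ltnW.
- move=> t ht; have := H3 t ht; rewrite mem_rev => /(nthP 0) [i0].
  rewrite size_takel; last by rewrite hs_size; exact: ltnW.
  move=> i0j; rewrite nth_take // => e.
  have i0m : i0 < m by apply: ltn_trans i0j (ltn_ord j).
  by exists (Ordinal i0m).
Qed.

Definition edge (j : 'I_m) : vert n.+1 * vert n.+1 := (inord (f j), inord (nth 0 s j)).
Definition Ek (k : nat) : pedges n.+1 := [set e | [exists j : 'I_m, (j < k) && (e == edge j)]].

Lemma edge1 j : val (edge j).1 = f j.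
Proof. by rewrite /= inordK //; apply: ltn_trans (ltn_ord (f j)) _. Qed.
Lemma edge2 j : val (edge j).2 = nth 0 s j.
Proof. by rewrite /= inordK //; have [/andP [_ h] _ _] := s_props j. Qed.

Lemma s_inj (i j : 'I_m) : nth 0 s i = nth 0 s j -> i = j.
Proof.
move=> e; apply: val_inj => /=; case: (ltngtP i j) => // h.
- by have [_ H _] := s_props j; move: (H i h); rewrite e eqxx.
- by have [_ H _] := s_props i; move: (H j h); rewrite e eqxx.
Qed.

Lemma inEk k e : (e \in Ek k) = [exists j : 'I_m, (j < k) && (e == edge j)].
Proof. by rewrite inE. Qed.

Lemma Ek_pf k : is_pforest (Ek k).
Proof.
apply: gap_pforest.
- move=> e; rewrite inEk => /existsP [j /andP [_ /eqP ->]].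
  rewrite edge1 edge2; by have [/andP [h _] _ _] := s_props j.
- move=> a b c; rewrite !inEk => /existsP [i /andP [_ /eqP ei]] /existsP [j /andP [_ /eqP ej]].
  have e2 : nth 0 s i = nth 0 s j.
    have := congr1 (fun e : vert n.+1 * vert n.+1 => val e.2) ei.
    have := congr1 (fun e : vert n.+1 * vert n.+1 => val e.2) ej.
    by rewrite !edge2 /= => <- <-.
  have := s_inj e2 => eij; subst j.
  by move: ej; rewrite -ei => -[->].
- move=> p c z; rewrite inEk => /existsP [j /andP [jk /eqP ej]] hz.
  have e1 : val p = f j by rewrite -edge1 -ej.
  have e2 : val c = nth 0 s j by rewrite -edge2 -ej.
  have [_ _ H] := s_props j.
  rewrite e1 e2 in hz; have [i ij ei] := H z hz.
  apply/existsP; exists (edge i); rewrite inEk edge2 ei eqxx andbT.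
  apply/existsP; exists i; rewrite eqxx andbT; exact: ltn_trans ij jk.
Qed.

Definition Cf : chain_t n.+1 m := [ffun k : 'I_m.+1 => Ek k].

Lemma chCf k : k <= m -> ch Cf k = Ek k.
Proof. by move=> hk; rewrite /ch ffunE inordK. Qed.

Lemma Ek_step (k : 'I_m) : Ek k.+1 = edge k |: Ek k /\ edge k \notin Ek k.
Proof.
split.
- apply/setP => e; rewrite in_setU1 !inEk; apply/existsP/orP.
  + move=> [j /andP [jk /eqP ->]]; case: (eqVneq j k) => [->|ne]; first by left.
    right; apply/existsP; exists j; rewrite eqxx andbT.
    by rewrite ltn_neqAle -ltnS jk andbT val_eqE.
  + move=> [/eqP ->|/existsP [j /andP [jk ej]]].
    * by exists k; rewrite eqxx ltnSn.
    * by exists j; rewrite ej andbT; apply: ltnW.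
- rewrite inEk; apply/existsP => -[j /andP [jk /eqP ej]].
  have e2 : nth 0 s k = nth 0 s j by rewrite -edge2 -edge2 ej.
  by have := s_inj e2 => ekj; move: jk; rewrite ekj ltnn.
Qed.

Lemma Cf_chain : is_chain Cf.
Proof.
apply/and3P; split.
- rewrite chCf //; apply/eqP/setP => e; rewrite inEk in_set0.
  by apply/existsP => -[j]; rewrite ltn0.
- by apply/forallP => k; rewrite ffunE; exact: Ek_pf.
- apply/forallP => k; apply/existsP; exists (edge k).
  have [h1 h2] := Ek_step k.
  by rewrite chCf ?chCf ?h1 ?eqxx ?h2 //; apply: ltnW.
Qed.

Lemma psi_Cf : psi Cf = f.
Proof.
apply/ffunP => k; apply: val_inj; rewrite psiE; last exact: Cf_chain.
have [h1 h2] := Ek_step k.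
have hk : k < m := ltn_ord k.
have c1 : ch Cf k.+1 = Ek k.+1 by apply: chCf.
have c0 : ch Cf k = Ek k by apply: chCf; exact: ltnW.
by rewrite /pp (@ed_eq _ _ Cf k.+1 (edge k)) ?edge1 //= ?c1 ?c0.
Qed.

End Surj.

Theorem theorem4p3 (n m : nat) (hm : 1 <= m <= n) :
  exists psi : chain_t n m -> pf_t n m,
    [/\ chain_pf_bij psi,
        psi_spec psi,
        (forall psi' : chain_t n m -> pf_t n m,
            chain_pf_bij psi' -> psi_spec psi' ->
            forall C, is_chain C -> psi' C = psi C) &
        (forall C, is_chain C -> forall i, 1 <= i <= m ->
            pv (psi C) i = pfcomp (sP (ch C m)) (lam C) i)].
Proof.
case: n hm => [|n] hm; first by lia.
exists (@psi n m); split.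
- split.
  + move=> C hC; rewrite /is_parking spots_psi //; apply/allP => x /mapP [i _ ->].
    exact: cc_le.
  + exact: psi_inj.
  + move=> f hf; exists (Cf f); [exact: Cf_chain | exact: psi_Cf].
- move=> C hC; split => j hj; [exact: spec1_psi | exact: omega_psi].
- by move=> psi' _ hs C hC; apply: psi_unique.
- move=> C hC i hi; rewrite /pfcomp (lam_cc hC hi) /= (sP_cc hC hi).
  exact: pv_psi.
Qed.
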